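(* For every signed composition $\alpha$ of $n$, $\Theta^{\pm}(\widetilde{S}_\alpha)=X^0_{|\alpha|}$, and for every $J\subseteq[n-1]$, $$\Theta(X_J)=2^{1+\#J}\sum_{F\in\mathring{\mathcal{F}}_n,\ F\subseteq J\cup(J+1)}\mathring{P}_F.$$ In particular, the image of $\Theta^{\pm}$ is $I_n^0$ and the image of $\Theta$ is $\mathring{\mathcal{P}}_n$.
   Context: Group algebras over $\mathbb{Q}$ with product composition. $B_n$: signed permutations $w=w_1\dots w_n$, values ordered $\cdots<-2<-1<1<2<\cdots$, $w_0=0$; $\mathrm{Des}(w)=\{i\in\{0,\dots,n-1\}:w_i>w_{i+1}\}$; $X_J=\sum_{\mathrm{Des}(w)\subseteq J}w$; $I_n^0=\mathrm{span}\{X_J:0\in J\}$. Signed composition of $n$: $\alpha=(a_1,\dots,a_k)$, $a_i\in\mathbb{Z}\setminus\{0\}$, $\sum|a_i|=n$; $|\alpha|=(|a_1|,\dots,|a_k|)$. $T_\alpha$: sum of $w\in B_n$ such that the successive intervals of $[n]$ of lengths $|a_1|,\dots,|a_k|$ are exactly the maximal intervals on which the sign of $w_j$ is constant and $|w_j|$ increasing, with signs those of the $a_i$. $\Omega(B_n)=\mathrm{span}\{T_\alpha\}$ (Mantaci–Reutenauer algebra, a subalgebra of $\mathbb{Q}B_n$ containing all $X_J$). $\widetilde{S}_\alpha$: sum of $w\in B_n$ such that on each of these intervals the entries $w_j$ are increasing and have the sign of the corresponding $a_i$. For an ordinary composition $\beta=(b_1,\dots,b_h)$ with associated subset $J_\beta=\{b_1,b_1+b_2,\dots,b_1+\dots+b_{h-1}\}$,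 $X^0_\beta=X_{\{0\}\cup J_\beta}$. In $\mathbb{Q}\mathfrak{S}_n$: $\mathrm{Des}(u)=\{i\in[n-1]:u_i>u_{i+1}\}$, $X_J=\sum_{\mathrm{Des}(u)\subseteq J}u$ for $J\subseteq[n-1]$, $\Sigma(A_{n-1})=\mathrm{span}\{X_J\}$; $\mathring{\mathrm{Peak}}(u)=\{i\in\{2,\dots,n-1\}:u_{i-1}<u_i>u_{i+1}\}$; $\mathring{\mathcal{F}}_n$: subsets of $\{2,\dots,n-1\}$ without two consecutive integers; $\mathring{P}_F=\sum_{\mathring{\mathrm{Peak}}(u)=F}u$; $\mathring{\mathcal{P}}_n=\mathrm{span}\{\mathring{P}_F\}$. $\Theta:\Sigma(A_{n-1})\to\Sigma(A_{n-1})$ is $\Theta(a)=2\mathring{P}_\emptyset\cdot a$ and $\Theta^{\pm}:\Omega(B_n)\to\Omega(B_n)$ is $\Theta^{\pm}(a)=X_{\{0\}}\cdot a$. $J+1=\{j+1:j\in J\}$. *)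

(* Defs.v *)
From HB Require Import structures.
From mathcomp Require Import all_boot all_order all_algebra all_fingroup.
Set Implicit Arguments. Unset Strict Implicit. Unset Printing Implicit Defensive.
Import Order.TTheory GRing.Theory Num.Theory.
Local Open Scope ring_scope.

Definition galg (G : finType) := {ffun G -> rat}.

Definition gmul (G : finType) (m : G -> G -> G) (a b : galg G) : galg G :=
  [ffun w => \sum_(u : G) \sum_(v : G) (if m u v == w then a u * b v else 0)].

Definition gscale (G : finType) (c : rat) (a : galg G) : galg G :=
  [ffun w => c * a w].

Definition gsum (G : finType) (P : pred G) : galg G :=
  [ffun w => if P w then 1 else 0].

Definition inspan (G : finType) (P : galg G -> Prop) (x : galg G) : Prop :=
  exists s : seq (rat * galg G),
    (forall p, p \in s -> P p.2) /\
    x = \sum_(p <- s) gscale p.1 p.2.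

(* u : 'S_n is the permutation with u_k = (u (k-1)) + 1 for k in 1..n.
   pval u k is u_k for k in 1..n (and 0 otherwise). *)
Definition pval n (u : 'S_n) (k : nat) : nat :=
  if k is k'.+1 then oapp (fun i : 'I_n => (u i).+1) 0%N (insub k') else 0%N.

(* Product composition: (u v)(k) = u (v k).  In mathcomp, (v * u) x = u (v x). *)
Definition Amul n (u v : 'S_n) : 'S_n := (v * u)%g.

(* Subsets of [n-1] = {1,...,n-1} are represented as sets J : {set 'I_n}
   with 0 \notin J; the element i stands for the integer val i. *)
Definition DesA n (u : 'S_n) : {set 'I_n} :=
  [set i : 'I_n | (0 < val i)%N && (pval u (val i) > pval u (val i).+1)%N].

Definition XA n (J : {set 'I_n}) : galg 'S_n :=
  gsum (fun u : 'S_n => DesA u \subset J).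

Definition PeakA n (u : 'S_n) : {set 'I_n} :=
  [set i : 'I_n | [&& (1 < val i)%N,
                     (pval u (val i).-1 < pval u (val i))%N &
                     (pval u (val i) > pval u (val i).+1)%N]].

(* F is in \mathring{F}_n: F subset of {2,...,n-1} without two consecutive
   integers. *)
Definition peakset n (F : {set 'I_n}) : bool :=
  [forall i in F, (1 < val i)%N] &&
  [forall i in F, forall j in F, val i != (val j).+1].

Definition PA n (F : {set 'I_n}) : galg 'S_n :=
  gsum (fun u : 'S_n => PeakA u == F).

Definition inJJ1 n (J : {set 'I_n}) (f : 'I_n) : bool :=
  (f \in J) || [exists j in J, (val j).+1 == val f].

Definition ThetaA n (a : galg 'S_n) : galg 'S_n :=
  gmul (@Amul n) (gscale 2 (PA set0)) a.

(* A signed permutation w is a pair (s, e): w_k = -(s(k-1)+1) if e(k-1),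
   and w_k = s(k-1)+1 otherwise, for k in 1..n. *)
Notation bperm n := ('S_n * {ffun 'I_n -> bool})%type.

(* w_k as an integer (w_0 = 0, and 0 for k > n). *)
Definition bval n (w : bperm n) (k : nat) : int :=
  if k is k'.+1 then
    oapp (fun i : 'I_n => if w.2 i then - ((w.1 i).+1 : int) else ((w.1 i).+1 : int))
         0 (insub k')
  else 0.

(* Product composition (u v)(k) = u (v (k)), extended by u(-k) = -u(k). *)
Definition Bmul n (u v : bperm n) : bperm n :=
  ((v.1 * u.1)%g, [ffun i => v.2 i (+) u.2 (v.1 i)]).

(* Descent set, a subset of {0,...,n-1}; i : 'I_n stands for val i. *)
Definition DesB n (w : bperm n) : {set 'I_n} :=
  [set i : 'I_n | bval w (val i).+1 < bval w (val i)].

Definition XB n (J : {set 'I_n}) : galg (bperm n) :=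
  gsum (fun w : bperm n => DesB w \subset J).

Definition signed_comp (n : nat) (al : seq int) : Prop :=
  all (fun a => a != 0) al /\ (\sum_(a <- al) `|a|)%N = n.

Definition psums (s : seq nat) : seq nat := scanl addn 0%N s.

(* 0-based index of the block of |al| containing position k (1 <= k <= n) *)
Definition blk (al : seq int) (k : nat) : nat :=
  count (fun c => c < k)%N (psums (map absz al)).

(* the sign (true = negative) of the block containing position k *)
Definition blksign (al : seq int) (k : nat) : bool :=
  nth 0 al (blk al k) < 0.

Definition bneg n (w : bperm n) (k : nat) : bool := bval w k < 0.

Definition TB n (al : seq int) : galg (bperm n) :=
  gsum (fun w : bperm n =>
    [forall i : 'I_n, bneg w (val i).+1 == blksign al (val i).+1] &&
    [forall i : 'I_n, ((val i).+1 < n)%N ==>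
       ((blk al (val i).+1 == blk al (val i).+2) ==
        ((bneg w (val i).+1 == bneg w (val i).+2) &&
         (`|bval w (val i).+1| < `|bval w (val i).+2|)%N))]).

Definition StB n (al : seq int) : galg (bperm n) :=
  gsum (fun w : bperm n =>
    [forall i : 'I_n, bneg w (val i).+1 == blksign al (val i).+1] &&
    [forall i : 'I_n, (((val i).+1 < n)%N && (blk al (val i).+1 == blk al (val i).+2))
        ==> (bval w (val i).+1 < bval w (val i).+2)]).

(* X^0_beta = X_{ {0} \cup J_beta } for an ordinary composition beta *)
Definition X0B n (be : seq nat) : galg (bperm n) :=
  XB [set i : 'I_n | (val i == 0)%N || (val i \in psums be)].

Definition X0only n : galg (bperm n) :=
  gsum (fun w : bperm n => [forall i in DesB w, val i == 0%N]).

Definition ThetaB n (a : galg (bperm n)) : galg (bperm n) :=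
  gmul (@Bmul n) (X0only n) a.

(* generators of Omega(B_n) and of I_n^0 *)
Definition isTgen n (x : galg (bperm n)) : Prop :=
  exists al, signed_comp n al /\ x = TB n al.
Definition isI0 n (x : galg (bperm n)) : Prop :=
  exists J : {set 'I_n}, [exists i in J, val i == 0%N] /\ x = XB J.
Definition isXA n (x : galg 'S_n) : Prop :=
  exists J : {set 'I_n}, (forall j, j \in J -> 0 < val j)%N /\ x = XA J.
Definition isPA n (x : galg 'S_n) : Prop :=
  exists F : {set 'I_n}, peakset F /\ x = PA F.

(* Main.v *)
Require Import Defs.
From HB Require Import structures.
From mathcomp Require Import all_boot all_order all_algebra all_fingroup.
From mathcomp Require Import zify.
Import Defs.
Import Order.TTheory GRing.Theory Num.Theory.
Local Open Scope ring_scope.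
Set Warnings "-notation-overridden -ambiguous-paths -notation-incompatible-prefix".
Set Implicit Arguments. Unset Strict Implicit. Unset Printing Implicit Defensive.

Lemma gscale1 (G : finType) (a : {ffun G -> rat}) : gscale 1 a = a.
Proof. by apply/ffunP => w; rewrite !ffunE mul1r. Qed.
Lemma gscaleA (G : finType) c d (a : {ffun G -> rat}) : gscale c (gscale d a) = gscale (c * d) a.
Proof. by apply/ffunP => w; rewrite !ffunE mulrA. Qed.
Lemma gscale_sum (G : finType) c (I : Type) (r : seq I) (F : I -> {ffun G -> rat}) :
  gscale c (\sum_(i <- r) F i) = \sum_(i <- r) gscale c (F i).
Proof.
elim: r => [|i r IH]; first by rewrite !big_nil; apply/ffunP => w; rewrite !ffunE mulr0.
by rewrite !big_cons -IH; apply/ffunP => w; rewrite !ffunE mulrDr.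
Qed.

Lemma gsum_ext (G : finType) (P Q : pred G) : P =1 Q -> gsum P = gsum Q.
Proof. by move=> PQ; apply/ffunP => w; rewrite !ffunE PQ. Qed.

Definition glin (G : finType) (f : {ffun G -> rat} -> {ffun G -> rat}) :=
  f 0 = 0 /\ (forall a b, f (a + b) = f a + f b) /\ (forall c a, f (gscale c a) = gscale c (f a)).

Lemma gmul_lin (G : finType) m (a : {ffun G -> rat}) : glin (gmul m a).
Proof.
split; [|split].
- apply/ffunP => w; rewrite !ffunE; apply: big1 => u _; apply: big1 => v _.
  by rewrite ffunE mulr0; case: ifP.
- move=> b c; apply/ffunP => w; rewrite !ffunE -big_split /=; apply: eq_bigr => u _.
  rewrite -big_split /=; apply: eq_bigr => v _; rewrite ffunE.
  by case: ifP => _; rewrite ?addr0 // mulrDr.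
- move=> c b; apply/ffunP => w; rewrite !ffunE mulr_sumr; apply: eq_bigr => u _.
  rewrite mulr_sumr; apply: eq_bigr => v _; rewrite ffunE.
  by case: ifP => _; rewrite ?mulr0 // mulrCA.
Qed.

Lemma inspan0 (G : finType) (P : {ffun G -> rat} -> Prop) : inspan P 0.
Proof. by exists [::]; split => //; rewrite big_nil. Qed.

Lemma inspan1 (G : finType) (P : {ffun G -> rat} -> Prop) x : P x -> inspan P x.
Proof.
move=> Px; exists [:: (1, x)]; split.
  by move=> p; rewrite inE => /eqP ->.
by rewrite big_cons big_nil addr0 gscale1.
Qed.

Lemma inspanD (G : finType) (P : {ffun G -> rat} -> Prop) x y :
  inspan P x -> inspan P y -> inspan P (x + y).
Proof.
move=> [s [Hs ->]] [t [Ht ->]]; exists (s ++ t); split.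
  by move=> p; rewrite mem_cat => /orP [/Hs|/Ht].
by rewrite big_cat.
Qed.

Lemma inspanZ (G : finType) (P : {ffun G -> rat} -> Prop) c x :
  inspan P x -> inspan P (gscale c x).
Proof.
move=> [s [Hs ->]]; exists [seq (c * p.1, p.2) | p <- s]; split.
  by move=> p /mapP [q /Hs Hq ->].
rewrite big_map gscale_sum; apply: eq_bigr => p _; by rewrite gscaleA.
Qed.

Lemma inspan_sum (G : finType) (P : {ffun G -> rat} -> Prop) (I : finType) (Q : pred I) (F : I -> {ffun G -> rat}) :
  (forall i, Q i -> inspan P (F i)) -> inspan P (\sum_(i | Q i) F i).
Proof.
move=> H; apply: (big_ind (inspan P)); [exact: inspan0| exact: inspanD | exact: H].
Qed.

Lemma inspan_image (G : finType) (P Q : {ffun G -> rat} -> Prop) f :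
  glin f -> (forall x, P x -> inspan Q (f x)) -> forall a, inspan P a -> inspan Q (f a).
Proof.
move=> [f0 [fD fZ]] H a [s [Hs ->]]; elim: s Hs => [|p s IH] Hs.
  by rewrite big_nil f0; exact: inspan0.
rewrite big_cons fD; apply: inspanD; last by apply: IH => q qs; apply: Hs; rewrite inE qs orbT.
by rewrite fZ; apply: inspanZ; apply: H; apply: Hs; rewrite inE eqxx.
Qed.

Definition inimg (G : finType) (P : {ffun G -> rat} -> Prop) f (y : {ffun G -> rat}) :=
  exists a, inspan P a /\ y = f a.

Lemma inimg0 (G : finType) (P : {ffun G -> rat} -> Prop) f : glin f -> inimg P f 0.
Proof. by move=> [f0 _]; exists 0; split; [exact: inspan0| by rewrite f0]. Qed.

Lemma inimgD (G : finType) (P : {ffun G -> rat} -> Prop) f x y : glin f ->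
  inimg P f x -> inimg P f y -> inimg P f (x + y).
Proof.
move=> [_ [fD _]] [a [Ha ->]] [b [Hb ->]]; exists (a + b); split; last by rewrite fD.
exact: inspanD.
Qed.

Lemma inimgZ (G : finType) (P : {ffun G -> rat} -> Prop) f c x : glin f ->
  inimg P f x -> inimg P f (gscale c x).
Proof.
move=> [_ [_ fZ]] [a [Ha ->]]; exists (gscale c a); split; last by rewrite fZ.
exact: inspanZ.
Qed.

Lemma inimg_sum (G : finType) (P : {ffun G -> rat} -> Prop) f (I : finType) (Q : pred I) (F : I -> {ffun G -> rat}) :
  glin f -> (forall i, Q i -> inimg P f (F i)) -> inimg P f (\sum_(i | Q i) F i).
Proof.
move=> fl H; apply: (big_ind (inimg P f)); [exact: inimg0| |exact: H].
by move=> x y; apply: inimgD.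
Qed.

Lemma inimg_span (G : finType) (P Q : {ffun G -> rat} -> Prop) f : glin f ->
  (forall y, Q y -> inimg P f y) -> forall y, inspan Q y -> inimg P f y.
Proof.
move=> fl H y [s [Hs ->]]; elim: s Hs => [|p s IH] Hs.
  by rewrite big_nil; exact: inimg0.
rewrite big_cons; apply: inimgD => //; last by apply: IH => q qs; apply: Hs; rewrite inE qs orbT.
by apply: inimgZ => //; apply: H; apply: Hs; rewrite inE eqxx.
Qed.

Lemma gmulE (G : finType) (m : G -> G -> G) (a b : galg G) w :
  gmul m a b w = \sum_(u : G) \sum_(v : G) (if m u v == w then a u * b v else 0).
Proof. by rewrite ffunE. Qed.

Arguments bval : simpl never.
Arguments pval : simpl never.
Definition sgv (b : bool) (k : nat) : int := if b then - (Posz k.+1) else Posz k.+1.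

Lemma bvalE n (w : bperm n) (i : 'I_n) : bval w (val i).+1 = sgv (w.2 i) (w.1 i).
Proof. by rewrite /bval valK /=. Qed.

Lemma bval0 n (w : bperm n) : bval w 0 = 0.
Proof. by []. Qed.

Lemma sgv_neg b k : (sgv b k < 0) = b.
Proof. by case: b; rewrite /sgv ?oppr_lt0 ?ltr0n // ltrn0. Qed.

Lemma sgv_abs b k : `|sgv b k|%N = k.+1.
Proof. by case: b; rewrite /sgv ?abszN. Qed.

Lemma sgv_injk b c k l : sgv b k = sgv c l -> k = l.
Proof. by move=> /(congr1 absz); rewrite !sgv_abs => -[]. Qed.

Lemma sgvN b k : sgv (~~ b) k = - sgv b k.
Proof. by case: b; rewrite /sgv ?opprK. Qed.

Lemma sgv_lt_same b k l : (sgv b k < sgv b l) = if b then (l < k)%N else (k < l)%N.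
Proof. by case: b; rewrite /sgv ?ltrN2 ltz_nat ltnS. Qed.

Lemma sgv_lt_cases a b k l : k != l ->
  (sgv a k < sgv b l) = if (k < l)%N then ~~ b else a.
Proof.
move=> kl; case: a; case: b; rewrite /sgv /=.
- by rewrite ltrN2 ltz_nat ltnS; case: ltngtP kl.
- by rewrite if_same (@lt_trans _ _ 0) ?oppr_lt0 ?ltr0n.
- by rewrite if_same; apply/negbTE; rewrite -leNgt (@le_trans _ _ 0) ?oppr_le0 ?ler0n.
- by rewrite ltz_nat ltnS; case: ltngtP kl.
Qed.

Lemma sgv_neq a b k l : k != l -> sgv a k != sgv b l.
Proof. by move=> kl; apply/eqP => /sgv_injk /eqP; rewrite (negbTE kl). Qed.

Definition udiv n (x v : bperm n) : bperm n :=
  ((v.1^-1 * x.1)%g, [ffun k => x.2 ((v.1^-1)%g k) (+) v.2 ((v.1^-1)%g k)]).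

Lemma BmulP n (u v x : bperm n) : (Bmul u v == x) = (u == udiv x v).
Proof.
case: u v x => [u1 u2] [v1 v2] [x1 x2]; rewrite /Bmul /udiv /=.
apply/eqP/eqP => [[<- <-]|[-> ->]]; congr pair.
- by rewrite mulKg.
- by apply/ffunP => k; rewrite !ffunE permKV addbAC addbb.
- by rewrite mulKVg.
- by apply/ffunP => i; rewrite !ffunE permK addbC -addbA addbb addbF.
Qed.

Lemma udiv1 n (x v : bperm n) i : (udiv x v).1 (v.1 i) = x.1 i.
Proof. by rewrite /udiv /= permM permK. Qed.
Lemma udiv2 n (x v : bperm n) i : (udiv x v).2 (v.1 i) = x.2 i (+) v.2 i.
Proof. by rewrite /udiv /= ffunE permK. Qed.

Lemma incr_nat (f : nat -> int) n :
  (forall k, (k.+1 < n)%N -> f k < f k.+1) -> forall k l, (k < l)%N -> (l < n)%N -> f k < f l.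
Proof.
move=> H k; elim=> // l IH; rewrite ltnS leq_eqVlt => /orP [/eqP -> |kl] ln; first exact: H.
by apply: lt_trans (IH kl (ltnW ln)) (H _ ln).
Qed.

Definition X0b n (u : bperm n) := [forall i in DesB u, val i == 0%N].

Lemma X0bP n (u : bperm n) :
  X0b u = [forall i : 'I_n, forall j : 'I_n, (i < j)%N ==> (sgv (u.2 i) (u.1 i) < sgv (u.2 j) (u.1 j))].
Proof.
apply/forall_inP/forallP => [H i|H i].
  have inc : forall k, (k.+1 < n)%N -> bval u k.+1 < bval u k.+2.
    move=> k kn; have H' := H (Ordinal kn); rewrite inE in H'.
    have nd : ~~ (bval u k.+2 < bval u k.+1) by apply/negP => /H'.
    have kn' : (k < n)%N by apply: ltnW.
    have e1 : bval u k.+1 = bval u (val (Ordinal kn')).+1 by [].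
    have e2 : bval u k.+2 = bval u (val (Ordinal kn)).+1 by [].
    move: nd; rewrite e1 e2 !bvalE -leNgt le_eqVlt => /orP [/eqP e|//].
    by move/sgv_injk: e => /val_inj /perm_inj /(congr1 val) /= /n_Sn.
  apply/forallP => j; apply/implyP => ij.
  have := incr_nat inc ij (ltn_ord j); by rewrite !bvalE.
rewrite inE => Hd; case: i Hd => [[|k] kn] Hd //.
have kn' : (k < n)%N by apply: ltnW.
have := forallP (H (Ordinal kn')) (Ordinal kn); rewrite /= ltnSn /= => lt.
change (is_true (bval u (val (Ordinal kn)).+1 < bval u (val (Ordinal kn')).+1)) in Hd.
by move: Hd; rewrite !bvalE => /(lt_trans lt); rewrite ltxx.
Qed.

Section Rank.
Variables (n : nat) (y : 'I_n -> int) (yinj : injective y).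
Definition rk (i : 'I_n) : nat := #|[set j | y j < y i]|.
Lemma rk_lt i : (rk i < n)%N.
Proof.
rewrite /rk -[n in (_ < n)%N]card_ord -cardsT; apply: proper_card; rewrite properT.
apply/eqP => e; have : i \in [set j | y j < y i] by rewrite e inE.
by rewrite inE ltxx.
Qed.
Definition rko i : 'I_n := Ordinal (rk_lt i).
Lemma rk_mono i j : y i < y j -> (rk i < rk j)%N.
Proof.
move=> lt; apply: proper_card; apply/properP; split.
  by apply/subsetP => k; rewrite !inE => /lt_trans; apply.
by exists i; rewrite !inE ?lt ?ltxx.
Qed.
Lemma rk_ltE i j : (rk i < rk j)%N = (y i < y j).
Proof.
case: (ltgtP (y i) (y j)) => [/rk_mono -> //| /rk_mono h | /yinj ->]; last by rewrite ltnn.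
by apply/negbTE; rewrite -leqNgt ltnW.
Qed.
Lemma rko_inj : injective rko.
Proof.
move=> i j /(congr1 val) /= e; case: (ltgtP (y i) (y j)) => [/rk_mono|/rk_mono|/yinj //];
  by rewrite e ltnn.
Qed.
Definition rkperm : 'S_n := perm rko_inj.
Lemma rkpermE i : val (rkperm i) = rk i.
Proof. by rewrite permE. Qed.
Lemma rkperm_ltE i j : (rkperm i < rkperm j)%N = (y i < y j).
Proof. by rewrite !rkpermE rk_ltE. Qed.

Lemma card_lt_ord m : (m <= n)%N -> #|[set k : 'I_n | (k < m)%N]| = m.
Proof.
move=> mn; rewrite -sum1dep_card (big_ord_narrow mn).
by rewrite sum1_card card_ord.
Qed.

Lemma card_lt_perm (p : 'S_n) i : #|[set j | (p j < p i)%N]| = p i.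
Proof.
have -> : [set j | (p j < p i)%N] = p @^-1: [set k : 'I_n | (k < p i)%N].
  by apply/setP => j; rewrite !inE.
by rewrite card_preimset ?card_lt_ord //; [apply: ltnW | apply: perm_inj].
Qed.

Lemma rk_unique (p : 'S_n) : (forall i j, (p i < p j)%N -> y i < y j) -> p = rkperm.
Proof.
move=> H; apply/permP => i; apply: val_inj; rewrite rkpermE /= -card_lt_perm /rk.
congr #|pred_of_set _|; apply/setP => j; rewrite !inE.
apply/idP/idP => [/H //|lt]; case: (ltngtP (p j) (p i)) => // [/H|/val_inj/perm_inj ji].
  by move=> /(lt_trans lt); rewrite ltxx.
by move: lt; rewrite ji ltxx.
Qed.
End Rank.

Definition yv n (x : bperm n) (s : {ffun 'I_n -> bool}) (i : 'I_n) : int :=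
  sgv (x.2 i (+) s i) (x.1 i).
Lemma yv_inj n (x : bperm n) s : injective (yv x s).
Proof. by move=> i j /sgv_injk /val_inj /perm_inj. Qed.
Definition v0 n (x : bperm n) s : bperm n := (rkperm (@yv_inj n x s), s).

Lemma X0onlyE n (u : bperm n) : X0only n u = if X0b u then 1 else 0.
Proof. by rewrite ffunE. Qed.

Lemma fiber1 n (P : pred (bperm n)) (x : bperm n) :
  gmul (@Bmul n) (X0only n) (gsum P) x = \sum_(v | P v && X0b (udiv x v)) 1.
Proof.
rewrite ffunE exchange_big /= [RHS]big_mkcond /=; apply: eq_bigr => v _.
under eq_bigr => u _ do rewrite BmulP.
rewrite -big_mkcond big_pred1_eq X0onlyE ffunE.
by case: (P v); case: (X0b _); rewrite ?mulr0 ?mulr1 ?mul0r.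
Qed.

Lemma X0b_udiv n (x v : bperm n) s : v.2 = s -> X0b (udiv x v) = (v == v0 x s).
Proof.
move=> vs; rewrite X0bP; apply/idP/eqP => [H|->].
  have H' : forall i j, (v.1 i < v.1 j)%N -> yv x s i < yv x s j.
    move=> i j lt; have := forallP (forallP H (v.1 i)) (v.1 j).
    by rewrite lt /= !udiv1 !udiv2 vs.
  have := rk_unique (@yv_inj n x s) H'; case: v vs {H H'} => v1 v2 /= -> ->.
  by [].
apply/forallP => i; apply/forallP => j; apply/implyP => ij.
set p := (v0 x s).1.
have ei : i = p (p^-1%g i) by rewrite permKV.
have ej : j = p (p^-1%g j) by rewrite permKV.
move: ij; rewrite ei ej !udiv1 !udiv2 /= /p /v0 /= rkperm_ltE /yv.
by [].
Qed.

Lemma fiber n (x : bperm n) (s : {ffun 'I_n -> bool}) (Q : pred (bperm n)) :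
  gmul (@Bmul n) (X0only n) (gsum (fun v => (v.2 == s) && Q v)) x =
  if Q (v0 x s) then 1 else 0.
Proof.
rewrite fiber1.
have -> : \sum_(v | (v.2 == s) && Q v && X0b (udiv x v)) (1 : rat) =
          \sum_(v | (v == v0 x s) && Q v) 1.
  apply: eq_bigl => v; case: (eqVneq v.2 s) => [vs|vs] /=.
    by rewrite (X0b_udiv x vs) andbC.
  by apply/esym/negbTE; apply/andP => -[/eqP e _]; move: vs; rewrite e eqxx.
case: (boolP (Q (v0 x s))) => Hq.
  by rewrite (big_pred1 (v0 x s)) // => v /=; case: (eqVneq v (v0 x s)) => [->|] //=.
by rewrite big_pred0 // => v; apply/negbTE; apply/andP => -[/eqP -> ]; apply/negP.
Qed.

Lemma bval_next n (w : bperm n) (i : 'I_n) (h : ((val i).+1 < n)%N) :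
  bval w (val i).+2 = sgv (w.2 (Ordinal h)) (w.1 (Ordinal h)).
Proof. exact: (bvalE w (Ordinal h)). Qed.

Lemma ord_next_neq n (i : 'I_n) (h : ((val i).+1 < n)%N) : i != Ordinal h.
Proof. by apply/eqP => /(congr1 val) /= /n_Sn. Qed.

Lemma bval_ltN n (x : bperm n) (i : 'I_n) (h : ((val i).+1 < n)%N) :
  (bval x (val i).+1 < bval x (val i).+2) = ~~ (bval x (val i).+2 < bval x (val i).+1).
Proof.
have ne : (x.1 (Ordinal h) : nat) != x.1 i.
  by apply/eqP => /val_inj /perm_inj /eqP; rewrite eq_sym (negbTE (ord_next_neq h)).
by rewrite bvalE (bval_next _ h) ltNge le_eqVlt (negbTE (sgv_neq _ _ ne)).
Qed.

Definition ascs n (w : bperm n) (bd : nat -> bool) :=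
  [forall i : 'I_n, (((val i).+1 < n)%N && ~~ bd (val i).+1) ==> (bval w (val i).+1 < bval w (val i).+2)].

Definition Sgen n (s : {ffun 'I_n -> bool}) (bd : nat -> bool) : galg (bperm n) :=
  gsum (fun w : bperm n => (w.2 == s) && ascs w bd).

Lemma part1gen n (s : {ffun 'I_n -> bool}) (bd : nat -> bool)
  (hs : forall (i : 'I_n) (h : ((val i).+1 < n)%N), ~~ bd (val i).+1 -> s (Ordinal h) = s i)
  (x : bperm n) :
  ThetaB (Sgen s bd) x = if ascs x bd then 1 else 0.
Proof.
rewrite /ThetaB /Sgen fiber; congr (if _ then _ else _); apply: eq_forallb => i.
case: (boolP ((val i).+1 < n)%N) => h; last by [].
case: (boolP (bd (val i).+1)) => b; first by [].
rewrite -[~~ false]/true !andTb !implyTb.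
rewrite bvalE (bval_next _ h) (bvalE x) (bval_next x h) /v0 /= !rkpermE (hs i h b) sgv_lt_same.
rewrite !(rk_ltE (@yv_inj n x s)) /yv (hs i h b); case: (s i).
  by rewrite !addbT !sgvN ltrN2.
by rewrite !addbF.
Qed.

Lemma DesB_sub n (x : bperm n) (bd : nat -> bool) (K : {set 'I_n}) :
  (forall i : 'I_n, (i \in K) = (val i == 0%N) || bd (val i)) ->
  (DesB x \subset K) = ascs x bd.
Proof.
move=> HK; apply/subsetP/forallP => [H i|H j].
  apply/implyP => /andP [h nb]; rewrite (bval_ltN x h); apply/negP => d.
  have : Ordinal h \in K by apply: H; rewrite inE.
  by rewrite HK /= (negbTE nb).
rewrite inE HK; case: j => [[|k] kn] //= d.
case: (boolP (bd k.+1)) => // nb; exfalso.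
have kn' : (k < n)%N by apply: ltnW.
have := H (Ordinal kn'); rewrite /= kn nb /=.
have -> : bval x k.+2 = bval x (val (Ordinal kn')).+2 by [].
have -> : bval x k.+1 = bval x (val (Ordinal kn')).+1 by [].
by rewrite (@bval_ltN n x (Ordinal kn') kn) d.
Qed.

Lemma count_ltS (s : seq nat) k :
  count (fun c => (c < k.+1)%N) s = (count (fun c => (c < k)%N) s + count (pred1 k) s)%N.
Proof.
elim: s => [//|c s IH] /=; rewrite IH ltnS leq_eqVlt.
case: (ltngtP c k) => [ck|ck|_] /=; lia.
Qed.

Lemma blk_succ (al : seq int) k :
  (blk al k == blk al k.+1) = (k \notin psums (map absz al)).
Proof.
rewrite /blk count_ltS -{1}[count _ _]addn0 eqn_add2l eq_sym.
by rewrite -has_pred1 has_count; case: count.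
Qed.

Definition salpha n (al : seq int) : {ffun 'I_n -> bool} := [ffun i : 'I_n => blksign al (val i).+1].

Lemma bneg_forall n (w : bperm n) (s : {ffun 'I_n -> bool}) (f : nat -> bool)
  (hs : forall i : 'I_n, s i = f (val i).+1) :
  [forall i : 'I_n, bneg w (val i).+1 == f (val i).+1] = (w.2 == s).
Proof.
apply/forallP/eqP => [H|e i]; last by rewrite /bneg bvalE sgv_neg e -hs.
apply/ffunP => i; apply/eqP; by have := H i; rewrite /bneg bvalE sgv_neg hs.
Qed.

Lemma StB_Sgen n (al : seq int) :
  StB n al = Sgen (salpha n al) (fun m => m \in psums (map absz al)).
Proof.
apply: gsum_ext => w; rewrite (@bneg_forall n w (salpha n al) (blksign al)); last by move=> i; rewrite ffunE.
congr andb; apply: eq_forallb => i; case: (boolP ((val i).+1 < n)%N) => h //=.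
by rewrite blk_succ.
Qed.

Theorem part1 n (al : seq int) : ThetaB (StB n al) = X0B n (map absz al).
Proof.
apply/ffunP => x; rewrite StB_Sgen part1gen; last first.
  move=> i h; rewrite -blk_succ => /eqP e; by rewrite !ffunE /blksign /= e.
rewrite /X0B /XB ffunE (@DesB_sub n x (fun m => m \in psums (map absz al))) //.
by move=> i; rewrite inE.
Qed.

Definition inK n (J : {set 'I_n}) (m : nat) := [exists j in J, val j == m].

Lemma inK_val n (J : {set 'I_n}) (i : 'I_n) : inK J (val i) = (i \in J).
Proof.
apply/existsP/idP => [[j /andP [jJ /eqP /val_inj <-]] //|iJ].
by exists i; rewrite iJ eqxx.
Qed.

Lemma inK0 n m : inK (set0 : {set 'I_n}) m = false.
Proof. by apply/existsP => -[j]; rewrite inE. Qed.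

Definition fz n : {ffun 'I_n -> bool} := [ffun _ => false].

Lemma bval_fz n (u : 'S_n) k : bval (u, fz n) k = Posz (pval u k).
Proof.
case: k => [|k] //; rewrite /bval /pval; case: (ltnP k n) => h.
  by rewrite -[k]/(val (Ordinal h)) valK /= ffunE.
by rewrite insubN // -leqNgt.
Qed.

Lemma pvalE n (u : 'S_n) (i : 'I_n) : pval u (val i).+1 = (u i).+1.
Proof. by rewrite /pval valK. Qed.

Lemma DesA_DesB n (u : 'S_n) : DesA u = DesB (u, fz n).
Proof.
apply/setP => i; rewrite !inE !bval_fz ltz_nat.
by case: i => [[|k] kn] //=; rewrite /pval /= ltn0.
Qed.

Lemma X0b_ascs n (u : bperm n) : X0b u = ascs u (fun _ => false).
Proof.
rewrite -(@DesB_sub n u (fun _ => false) [set i | val i == 0%N]); last by move=> i; rewrite inE orbF.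
by apply/forall_inP/subsetP => H i /H; rewrite ?inE.
Qed.

Lemma DesA_ascs n (u : 'S_n) (J : {set 'I_n}) :
  (DesA u \subset J) = ascs (u, fz n) (inK J).
Proof.
rewrite -(@DesB_sub n (u, fz n) (inK J) [set i | (val i == 0%N) || (i \in J)]); last first.
  by move=> i; rewrite inE inK_val.
rewrite DesA_DesB; apply/subsetP/subsetP => H i d; have := H i d; rewrite ?inE.
  by move=> ->; rewrite orbT.
move: d; rewrite inE; case: i => [[|k] kn] //=.
by rewrite !bval_fz ltz_nat /pval /= ltn0.
Qed.

Lemma sum_pick (T : finType) (P : pred T) (t : T) :
  \sum_(F | P F) (if t == F then 1 else 0 : rat) = if P t then 1 else 0.
Proof.
rewrite -big_mkcondr; case: (boolP (P t)) => Pt.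
  by rewrite (big_pred1 t) // => F /=; rewrite eq_sym; case: (eqVneq F t) => [->|]; rewrite ?Pt ?andbF ?andbT.
by rewrite big_pred0 // => F; apply/negbTE; apply/andP => -[PF /eqP e]; move: Pt; rewrite e PF.
Qed.

Lemma sum_if (T : finType) (P : pred T) :
  \sum_(t : T) (if P t then 1 else 0 : rat) = (#|[set t | P t]|)%:R.
Proof.
by rewrite -big_mkcond /= -sum1dep_card natr_sum.
Qed.

Lemma sum_pair (T1 T2 : finType) (G : T1 * T2 -> rat) :
  \sum_(w : T1 * T2) G w = \sum_(a : T1) \sum_(b : T2) G (a, b).
Proof. by rewrite pair_bigA; apply: eq_bigr => -[a b]. Qed.

Definition nsign n (u : 'S_n) (bd : nat -> bool) : rat :=
  \sum_(e : {ffun 'I_n -> bool}) (if ascs (u, e) bd then 1 else 0).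

Lemma part2_chain n (J : {set 'I_n}) (s : 'S_n) :
  ThetaA (XA J) s =
  \sum_(v : 'S_n) (if DesA v \subset J then 1 else 0) * (2 * (if PeakA ((v^-1 * s)%g) == set0 then 1 else 0))
  /\
  \sum_(e : {ffun 'I_n -> bool}) ThetaB (Sgen (fz n) (inK J)) (s, e) =
  \sum_(v : 'S_n) (if DesA v \subset J then 1 else 0) * nsign ((v^-1 * s)%g) (fun _ => false).
Proof.
split.
  rewrite /ThetaA gmulE.
  transitivity (\sum_(v : 'S_n) \sum_(u : 'S_n)
     (if Amul u v == s then (gscale 2 (PA set0)) u * (XA J) v else 0)); first by rewrite exchange_big.
  apply: eq_bigr => v _.
  have -> : \sum_(u : 'S_n) (if Amul u v == s then (gscale 2 (PA set0)) u * (XA J) v else 0) =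
            \sum_(u : 'S_n | u == (v^-1 * s)%g) (gscale 2 (PA set0)) u * (XA J) v.
    rewrite [RHS]big_mkcond /=; apply: eq_bigr => u _.
    have -> : (Amul u v == s) = (u == (v^-1 * s)%g).
      by apply/eqP/eqP => [<-|->]; rewrite /Amul ?mulKg ?mulKVg.
    by [].
  by rewrite big_pred1_eq !ffunE mulrC.
under eq_bigr => e _ do rewrite /ThetaB /Sgen fiber1 big_mkcond sum_pair /=.
rewrite exchange_big /=; apply: eq_bigr => v _.
rewrite exchange_big /= (bigD1 (fz n)) //= eqxx /=.
rewrite [X in _ + X]big1 ?addr0; last first.
  by move=> w wn; apply: big1 => e _; rewrite (negbTE wn).
rewrite /nsign mulr_sumr -DesA_ascs.
have hinj : injective (fun e : {ffun 'I_n -> bool} => (udiv (s, e) (v, fz n)).2).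
  move=> a b /= /ffunP H; apply/ffunP => i; have := H (v i); rewrite !ffunE permK.
  by rewrite !addbF.
rewrite [RHS](reindex_inj hinj) /=; apply: eq_bigr => e _.
by case: (DesA v \subset J); rewrite ?mul1r ?mul0r //= X0b_ascs.
Qed.

Lemma foldr_prod (T : Type) (f : T -> nat) s : foldr muln 1%N (map f s) = (\prod_(x <- s) f x)%N.
Proof. by elim: s => [|x s IH]; rewrite ?big_nil ?big_cons //= IH. Qed.

Lemma card_family_prod n (F : 'I_n -> pred bool) :
  #|[set e : {ffun 'I_n -> bool} | [forall p, e p \in F p]]| = (\prod_(p : 'I_n) #|F p|)%N.
Proof.
have -> : #|[set e : {ffun 'I_n -> bool} | [forall p, e p \in F p]]| = #|family F|.
  by apply: eq_card => e; rewrite inE; apply/forallP/familyP.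
by rewrite card_family /image_mem foldr_prod big_enum.
Qed.

Lemma card_bool_pred (P : pred bool) : #|P| = (P true + P false)%N.
Proof. by rewrite -sum1_card big_mkcond big_bool /= !unfold_in; case: (P true); case: (P false). Qed.

Lemma nsign_ext n (u : 'S_n) bd bd' : bd =1 bd' -> nsign u bd = nsign u bd'.
Proof.
move=> e; apply: eq_bigr => f _; congr (if _ then _ else _).
by apply: eq_forallb => i; rewrite e.
Qed.

Section SignCount.
Variables (n : nat) (u : 'S_n) (bd : nat -> bool).
Let pv := Defs.pval u.
Definition lf (p : nat) := [&& (0 < p)%N, ~~ bd p & (pv p < pv p.+1)%N].
Definition rf (p : nat) := [&& (p.+1 < n)%N, ~~ bd p.+1 & (pv p.+2 < pv p.+1)%N].
Definition allowed (p : 'I_n) : pred bool := fun b => (lf p ==> ~~ b) && (rf p ==> b).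

Lemma pv_ord (i : 'I_n) : pv (val i).+1 = (u i).+1.
Proof. exact: pvalE. Qed.

Lemma ascs_family (e : {ffun 'I_n -> bool}) :
  ascs (u, e) bd = [forall p, e p \in allowed p].
Proof.
apply/forallP/forallP => [H p|H i].
  rewrite unfold_in /allowed; apply/andP; split; apply/implyP.
    case: p => [[|k] kn] //= /and3P [_ nb lt].
    have kn' : (k < n)%N by apply: ltnW.
    have := H (Ordinal kn'); rewrite /= kn nb /=.
    rewrite (bvalE (u, e) (Ordinal kn')) (@bval_next _ (u, e) (Ordinal kn') kn) /= sgv_lt_cases; last first.
      apply/eqP => /val_inj /perm_inj /(congr1 val) /= /n_Sn //.
    move: lt; rewrite -[k.+1]/(val (Ordinal kn')).+1 (pv_ord (Ordinal kn')).
    rewrite -[k.+2]/(val (Ordinal kn)).+1 (pv_ord (Ordinal kn)) ltnS => -> /=.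
    by have -> : Ordinal kn = Ordinal (ltn_ord (Ordinal kn)) by apply: val_inj.
  move=> /and3P [h nb lt]; have := H p; rewrite h nb /=.
  rewrite (bvalE (u, e) p) (bval_next _ h) /= sgv_lt_cases; last first.
    by apply/eqP => /val_inj /perm_inj /eqP; rewrite (negbTE (ord_next_neq h)).
  move: lt; rewrite -[(val p).+2]/(val (Ordinal h)).+1 (pv_ord (Ordinal h)) pv_ord ltnS.
  by move=> lt; rewrite ltnNge (ltnW lt).
apply/implyP => /andP [h nb].
have ne : (u i : nat) != u (Ordinal h).
  by apply/eqP => /val_inj /perm_inj /eqP; rewrite (negbTE (ord_next_neq h)).
rewrite (bvalE (u, e) i) (bval_next _ h) /= sgv_lt_cases //.
case: ltngtP ne => // lt _.
  have := H (Ordinal h); rewrite unfold_in /allowed /lf /= nb.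
  rewrite -[(val i).+1]/(val (Ordinal h)) pv_ord.
  rewrite -{1}[(val (Ordinal h))]/((val i).+1) pv_ord ltnS lt /=.
  by case/andP.
have := H i; rewrite unfold_in /allowed /rf h nb.
rewrite -[(val i).+2]/(val (Ordinal h)).+1 !pv_ord ltnS lt /=.
by case/andP => _ ->.
Qed.

Lemma nsign_prod : nsign u bd = (\prod_(p : 'I_n) ((~~ lf p) + (~~ rf p)))%N%:R.
Proof.
rewrite /nsign sum_if; congr (_%:R).
have -> : [set t | ascs (u, t) bd] = [set e : {ffun 'I_n -> bool} | [forall p, e p \in allowed p]].
  by apply/setP => e; rewrite !inE ascs_family.
rewrite card_family_prod; apply: eq_bigr => p _.
by rewrite card_bool_pred /allowed /=; case: (lf p); case: (rf p).
Qed.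
End SignCount.

Lemma sum_bool_card (T : finType) (P : pred T) : (\sum_(i : T) (P i : nat))%N = #|[set i | P i]|.
Proof. by rewrite -sum1dep_card [RHS]big_mkcond; apply: eq_bigr => i _; case: (P i). Qed.

Section SignCount2.
Variables (n : nat) (u : 'S_n) (J : {set 'I_n}).
Hypothesis hJ : forall j, j \in J -> (0 < val j)%N.
Hypothesis hn : (0 < n)%N.
Let bd := inK J.
Let pv := Defs.pval u.

Lemma pv_neq q : (0 < q)%N -> (q < n)%N -> pv q != pv q.+1.
Proof.
case: q => [//|k] _ kn; have kn' : (k < n)%N by apply: ltnW.
rewrite -[k.+1]/(val (Ordinal kn')).+1 -[k.+2]/(val (Ordinal kn)).+1 /pv !pvalE eqSS.
by apply/eqP => /val_inj /perm_inj /(congr1 val) /= /n_Sn.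
Qed.

Lemma sum_lfrf : (\sum_(p : 'I_n) (lf u bd p + rf u bd p))%N = (n.-1 - #|J|)%N.
Proof.
rewrite -(big_mkord (fun _ => true) (fun p => (lf u bd p + rf u bd p)%N)) big_split /=.
pose g q := [&& (0 < q)%N, (q < n)%N, ~~ bd q & (pv q.+1 < pv q)%N].
have -> : (\sum_(0 <= p < n) rf u bd p = \sum_(0 <= p < n) g p)%N.
  have e1 : (\sum_(0 <= q < n.+1) g q = g 0 + \sum_(0 <= p < n) g p.+1)%N by rewrite big_nat_recl.
  have e2 : (\sum_(0 <= q < n.+1) g q = \sum_(0 <= p < n) g p + g n)%N by rewrite big_nat_recr.
  have g0 : g 0%N = false by [].
  have gn : g n = false by rewrite /g ltnn andbF.
  rewrite e1 g0 gn add0n addn0 in e2.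
  by rewrite -e2; apply: eq_bigr => p _.
rewrite -big_split /=.
have -> : (\sum_(0 <= q < n) (lf u bd q + g q) = \sum_(0 <= q < n) ((0 < q)%N && ~~ bd q : nat))%N.
  apply: eq_big_nat => q /andP [_ qn]; rewrite /lf /g qn.
  case: (posnP q) => [->|q0] //=; case: (bd q) => //=.
  have := pv_neq q0 qn; rewrite /pv; case: ltngtP => //.
rewrite big_mkord (eq_bigr (fun q : 'I_n => ((0 < q)%N && (q \notin J) : nat))); last first.
  by move=> q _; rewrite /bd inK_val.
rewrite sum_bool_card.
case: n hn u J hJ => [//|n'] _ u' J' hJ' /=.
have -> : [set i : 'I_n'.+1 | (0 < i)%N && (i \notin J')] = [set~ ord0] :\: J'.
  by apply/setP => i; rewrite !inE andbC; case: i => [[|k] kn].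
rewrite cardsD cardsC1 card_ord /=.
have -> : [set~ ord0] :&: J' = J'.
  apply/setIidPr/subsetP => j jJ; rewrite !inE; apply/eqP => e.
  by have := hJ' _ jJ; rewrite e.
by [].
Qed.
End SignCount2.

Section SignCount3.
Variables (n : nat) (u : 'S_n) (J : {set 'I_n}).
Hypothesis hJ : forall j, j \in J -> (0 < val j)%N.
Hypothesis hn : (0 < n)%N.

Lemma conflictE :
  [forall p : 'I_n, ~~ (lf u (inK J) p && rf u (inK J) p)] = [forall f in PeakA u, inJJ1 J f].
Proof.
apply/forallP/forall_inP => [H f|H p].
  rewrite inE => /and3P [f1 lt1 lt2]; apply/negPn/negP => nJ.
  case: f f1 lt1 lt2 nJ => [[|[|k]] kn] //= _ lt1 lt2 nJ.
  have kn' : (k.+1 < n)%N by apply: ltnW.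
  have := H (Ordinal kn'); rewrite /lf /rf /= kn lt1 lt2 !andbT /=.
  have -> : inK J k.+2 = (Ordinal kn \in J) by rewrite -inK_val.
  have -> : inK J k.+1 = false.
    apply/existsP => -[j /andP [jJ /eqP e]]; move: nJ; rewrite negb_or => /andP [_ /existsP []].
    by exists j; rewrite jJ /= e.
  by move: nJ; rewrite negb_or => /andP [-> _].
apply/negP => /andP [/and3P [p0 nb1 lt1] /and3P [h nb2 lt2]].
have : Ordinal h \in PeakA u.
  rewrite inE /=; apply/and3P; split => //; by rewrite ltnS.
move/H; rewrite /inJJ1 -inK_val /= (negbTE nb2) /= => /existsP [j /andP [jJ /eqP e]].
move/negP: nb1; apply; apply/existsP; exists j; rewrite jJ /=.
by rewrite -eqSS e.
Qed.

Lemma prod_eval :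
  (\prod_(p : 'I_n) ((~~ lf u (inK J) p) + (~~ rf u (inK J) p)))%N =
  (2 ^ (1 + #|J|) * [forall p : 'I_n, ~~ (lf u (inK J) p && rf u (inK J) p)])%N.
Proof.
case: (boolP [forall p : 'I_n, ~~ (lf u (inK J) p && rf u (inK J) p)]) => H; last first.
  move/forallPn: H => [p]; rewrite negbK => /andP [l r].
  by rewrite muln0 (bigD1 p) //= l r.
rewrite muln1.
have e : forall p : 'I_n, ((~~ lf u (inK J) p) + (~~ rf u (inK J) p))%N =
                          (2 ^ (1 - (lf u (inK J) p + rf u (inK J) p)))%N.
  move=> p; have := forallP H p; by case: (lf _ _ p); case: (rf _ _ p).
rewrite (eq_bigr _ (fun p _ => e p)) -expn_sum; congr (2 ^ _)%N.
have s1 : (\sum_(p : 'I_n) (1 - (lf u (inK J) p + rf u (inK J) p)) +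
           \sum_(p : 'I_n) (lf u (inK J) p + rf u (inK J) p))%N = n.
  rewrite -big_split /= -[RHS]card_ord -sum1_card; apply: eq_bigr => p _.
  by have := forallP H p; case: (lf _ _ p); case: (rf _ _ p).
rewrite (@sum_lfrf n u J hJ hn) in s1.
have cJ : (#|J| < n)%N.
  rewrite -[n in (_ < n)%N]card_ord -cardsT; apply: proper_card; rewrite properT.
  apply/eqP => eJ; have := @hJ (Ordinal hn); rewrite eJ inE => /(_ isT).
  by [].
rewrite -subn1 in s1; move: s1 cJ hn.
set S := (\sum_(p : 'I_n) (1 - (lf u (inK J) p + rf u (inK J) p)))%N; lia.
Qed.

Lemma signcount :
  nsign u (inK J) = (2 ^ (1 + #|J|) * [forall f in PeakA u, inJJ1 J f])%N%:R.
Proof. by rewrite nsign_prod prod_eval conflictE. Qed.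
End SignCount3.

Lemma peakset_Peak n (u : 'S_n) : peakset (PeakA u).
Proof.
apply/andP; split; first by apply/forall_inP => i; rewrite inE => /and3P [].
apply/forall_inP => i; rewrite inE => /and3P [_ lti gti].
apply/forall_inP => j; rewrite inE => /and3P [_ ltj gtj].
apply/eqP => e; move: lti gtj; rewrite e /= => lti gtj.
by move: (ltn_trans lti gtj); rewrite ltnn.
Qed.

Lemma forall_in_false (T : finType) (A : {set T}) : [forall f in A, false] = (A == set0).
Proof.
apply/forall_inP/eqP => [H|-> f]; last by rewrite inE.
by apply/setP => f; rewrite inE; apply/negbTE/negP => /H.
Qed.

Lemma nsign0 n (hn : (0 < n)%N) (u : 'S_n) :
  nsign u (fun _ => false) = 2 * (if PeakA u == set0 then 1 else 0).
Proof.
rewrite (@nsign_ext n u _ (inK (set0 : {set 'I_n}))); last by move=> m; rewrite inK0.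
rewrite (@signcount n u set0) //; last by move=> j; rewrite inE.
rewrite cards0 addn0 expn1.
have -> : [forall f in PeakA u, inJJ1 (set0 : {set 'I_n}) f] = [forall f in PeakA u, false].
  apply: eq_forallb => f; congr (_ ==> _); rewrite /inJJ1 inE /=.
  by apply/existsP => -[j]; rewrite inE.
by rewrite forall_in_false; case: (PeakA u == set0); rewrite ?mulr1 ?mulr0.
Qed.

Theorem part2 n (hn : (0 < n)%N) (J : {set 'I_n}) (hJ : forall j, j \in J -> (0 < val j)%N) :
  ThetaA (XA J) =
  gscale (2 ^ (1 + #|J|))%:R
    (\sum_(F : {set 'I_n} | peakset F && [forall f in F, inJJ1 J f]) PA F).
Proof.
apply/ffunP => s.
have [c1 c2] := part2_chain J s.
rewrite c1.
have -> : \sum_(v : 'S_n) (if DesA v \subset J then 1 else 0) *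
             (2 * (if PeakA ((v^-1 * s)%g) == set0 then 1 else 0)) =
          \sum_(v : 'S_n) (if DesA v \subset J then 1 else 0) * nsign ((v^-1 * s)%g) (fun _ => false).
  by apply: eq_bigr => v _; rewrite nsign0.
rewrite -c2.
have -> : \sum_(e : {ffun 'I_n -> bool}) ThetaB (Sgen (fz n) (inK J)) (s, e) = nsign s (inK J).
  apply: eq_bigr => e _; rewrite part1gen //.
  by move=> i h _; rewrite !ffunE.
rewrite signcount // ffunE sum_ffunE.
under eq_bigr => F _ do rewrite ffunE.
rewrite sum_pick peakset_Peak /= natrM.
by case: [forall f in PeakA s, inJJ1 J f]; rewrite ?mulr1 ?mulr0.
Qed.

Definition ascn n (x : bperm n) (k : nat) := bval x k.+1 < bval x k.+2.

Definition Ycond n (x : bperm n) (a d : nat -> bool) :=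
  [forall i : 'I_n, ((val i).+1 < n)%N ==> ((a (val i) ==> ascn x (val i)) && (d (val i) ==> ~~ ascn x (val i)))].

Definition Ygen n (a d : nat -> bool) : galg (bperm n) := gsum (fun x => Ycond x a d).

Lemma gsum_split n (P Q R : pred (bperm n)) :
  (forall x, P x = Q x && ~~ R x) -> gsum P = gsum Q + gscale (-1) (gsum (fun x => Q x && R x)).
Proof.
move=> H; apply/ffunP => x; rewrite !ffunE H.
by case: (Q x); case: (R x); rewrite /= ?mulr0 ?addr0 ?mulr1 ?subrr.
Qed.

Lemma Ygen_base n (hn : (0 < n)%N) (a d : nat -> bool) :
  (forall i : 'I_n, ((val i).+1 < n)%N -> d (val i) = false) -> inspan (@isI0 n) (@Ygen n a d).
Proof.
move=> hd; apply: inspan1.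
exists [set i : 'I_n | (val i == 0%N) || ~~ a (val i).-1]; split.
  by apply/existsP; exists (Ordinal hn); rewrite inE eqxx.
apply/ffunP => x; rewrite /Ygen /XB !ffunE (@DesB_sub n x (fun m => ~~ a m.-1)); last first.
  by move=> i; rewrite inE.
congr (if _ then _ else _); apply: eq_forallb => i.
case: (boolP ((val i).+1 < n)%N) => h //=; rewrite negbK hd //= andbT.
by [].
Qed.

Lemma Ycond_d n (x : bperm n) (a d : nat -> bool) (i0 : 'I_n)
  (h0 : ((val i0).+1 < n)%N) (d0 : d (val i0)) :
  Ycond x a d = Ycond x a (fun m => d m && (m != val i0)) && ~~ ascn x (val i0).
Proof.
apply/forallP/andP => [H|[/forallP H1 H2] i].
  split; last by have := H i0; rewrite h0 d0 /= => /andP [].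
  apply/forallP => i; have := H i.
  by case: ((val i).+1 < n)%N; case: (a _); case: (d _); case: (_ != _); case: (ascn _ _).
have := H1 i; case: (eqVneq (val i) (val i0)) => [e|ne].
  by rewrite e h0 (negbTE H2) /= !implybT !andbT.
by rewrite /= andbT.
Qed.

Lemma Ycond_a n (x : bperm n) (a d : nat -> bool) (i0 : 'I_n) (h0 : ((val i0).+1 < n)%N) :
  Ycond x (fun m => a m || (m == val i0)) d = Ycond x a d && ascn x (val i0).
Proof.
apply/forallP/andP => [H|[/forallP H1 H2] i].
  split; last by have := H i0; rewrite h0 eqxx orbT /= => /andP [].
  apply/forallP => i; have := H i.
  by case: ((val i).+1 < n)%N; case: (a _); case: (d _); case: (_ == _); case: (ascn _ _).
have := H1 i; case: (eqVneq (val i) (val i0)) => [e|ne].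
  by rewrite e h0 H2 /= !orbT !implybT.
by rewrite /= orbF.
Qed.

Lemma Ygen_span n (hn : (0 < n)%N) k : forall (a d : nat -> bool),
  #|[set i : 'I_n | ((val i).+1 < n)%N && d (val i)]| = k -> inspan (@isI0 n) (@Ygen n a d).
Proof.
elim: k => [|k IH] a d hk.
  apply: Ygen_base => // i h; apply/negbTE/negP => di.
  have : (0 < #|[set i : 'I_n | ((val i).+1 < n)%N && d (val i)]|)%N.
    by apply/card_gt0P; exists i; rewrite inE h di.
  by rewrite hk.
have : (0 < #|[set i : 'I_n | ((val i).+1 < n)%N && d (val i)]|)%N by rewrite hk.
rewrite card_gt0 => /set0Pn [i0]; rewrite inE => /andP [h0 d0].
pose d' := fun m => d m && (m != val i0).
have hk' : #|[set i : 'I_n | ((val i).+1 < n)%N && d' (val i)]| = k.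
  have -> : [set i : 'I_n | ((val i).+1 < n)%N && d' (val i)] =
            [set i : 'I_n | ((val i).+1 < n)%N && d (val i)] :\ i0.
    apply/setP => i; rewrite !inE /d'; case: (eqVneq i i0) => [->|ne]; first by rewrite eqxx !andbF.
    have -> : (val i != val i0) by apply: contra ne => /eqP /val_inj ->.
    by rewrite andbT.
  by move: hk; rewrite (cardsD1 i0) inE h0 d0 => -[].
rewrite /Ygen (@gsum_split n _ (fun x => Ycond x a d') (fun x => ascn x (val i0))); last first.
  by move=> x; rewrite (Ycond_d _ _ h0 d0).
apply: inspanD; first exact: IH.
apply: inspanZ.
rewrite (gsum_ext (Q := fun x => Ycond x (fun m => a m || (m == val i0)) d')); last first.
  by move=> x; rewrite (Ycond_a _ _ _ h0).
exact: IH.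
Qed.

Definition aal (al : seq int) (k : nat) :=
  let b := blksign al k.+1 in let eqs := b == blksign al k.+2 in
  let same := blk al k.+1 == blk al k.+2 in (eqs && (same (+) b)) || (~~ eqs && same).
Definition dal (al : seq int) (k : nat) :=
  let b := blksign al k.+1 in let eqs := b == blksign al k.+2 in
  let same := blk al k.+1 == blk al k.+2 in (eqs && ~~ (same (+) b)) || (~~ eqs && same).

Lemma yv_cmp n (x : bperm n) (s : {ffun 'I_n -> bool}) (i : 'I_n) (h : ((val i).+1 < n)%N) :
  s (Ordinal h) = s i -> (yv x s i < yv x s (Ordinal h)) = ascn x (val i) (+) s i.
Proof.
move=> e; rewrite /yv e; case: (s i).
  rewrite !addbT !sgvN ltrN2 /ascn (bval_ltN x h) negbK.
  by rewrite (bvalE x) (bval_next x h).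
by rewrite !addbF /ascn (bvalE x) (bval_next x h).
Qed.

Lemma TB_Y n (al : seq int) : ThetaB (TB n al) = Ygen n (aal al) (dal al).
Proof.
apply/ffunP => x.
have -> : TB n al = gsum (fun w => (w.2 == salpha n al) &&
    [forall i : 'I_n, ((val i).+1 < n)%N ==>
       ((blk al (val i).+1 == blk al (val i).+2) ==
        ((bneg w (val i).+1 == bneg w (val i).+2) &&
         (`|bval w (val i).+1| < `|bval w (val i).+2|)%N))]).
  apply: gsum_ext => w; rewrite (@bneg_forall n w (salpha n al) (blksign al)) //.
  by move=> i; rewrite ffunE.
rewrite /ThetaB fiber /Ygen ffunE; congr (if _ then _ else _); apply: eq_forallb => i.
case: (boolP ((val i).+1 < n)%N) => h //=.
rewrite /bneg (bvalE (v0 x _)) (bval_next (v0 x _) h) !sgv_neg !sgv_abs /= !rkpermE ltnS.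
rewrite (rk_ltE (@yv_inj n x (salpha n al))).
have es : forall k : 'I_n, salpha n al k = blksign al (val k).+1 by move=> k; rewrite ffunE.
rewrite /aal /dal -!es.
case: (eqVneq (salpha n al i) (salpha n al (Ordinal h))) => [e|ne] /=.
  rewrite (@yv_cmp n x (salpha n al) i h); last by rewrite e.
  have e2 : blksign al (val i).+2 = salpha n al (Ordinal h) by rewrite es.
  rewrite e2 -e eqxx /=.
  by case: (blk al _ == blk al _); case: (salpha n al i); case: (ascn x _).
have e2 : blksign al (val i).+2 = salpha n al (Ordinal h) by rewrite es.
rewrite e2 (negbTE ne) /=.
by case: (blk al _ == blk al _); case: (ascn x _).
Qed.

Lemma ThetaB_TB_span n (hn : (0 < n)%N) (al : seq int) : inspan (@isI0 n) (ThetaB (TB n al)).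
Proof. by rewrite TB_Y; exact: (@Ygen_span n hn _ (aal al) (dal al) erefl). Qed.

Definition dif (a b : nat) := (b - a)%N.

Lemma path_filter_iota (p : pred nat) k : forall a b, (a < b)%N -> path ltn a [seq m <- iota b k | p m].
Proof.
elim: k => [//|k IH] a b ab /=.
case: (p b) => /=; first by rewrite ab IH.
by apply: IH; apply: ltn_trans ab _.
Qed.

Lemma scan_dif a c : path leq a c -> scanl addn a (pairmap dif a c) = c.
Proof.
elim: c a => [//|c0 c IH] a /= /andP [ac pc].
by rewrite /dif subnKC // IH.
Qed.

Lemma sum_dif a c : path leq a c -> (a + sumn (pairmap dif a c))%N = last a c.
Proof.
elim: c a => [|c0 c IH] a /=; first by rewrite addn0.
move=> /andP [ac pc]; rewrite addnA /dif subnKC //; exact: IH.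
Qed.

Lemma pos_dif a c : path ltn a c -> all (fun d => 0 < d)%N (pairmap dif a c).
Proof.
elim: c a => [//|c0 c IH] a /= /andP [ac pc].
by rewrite /dif subn_gt0 ac IH.
Qed.

Lemma path_ltn_leq a c : path ltn a c -> path leq a c.
Proof. apply: sub_path => x y; exact: ltnW. Qed.

Section Comp.
Variables (n : nat) (L : {set 'I_n}).
Hypothesis hn : (0 < n)%N.
Hypothesis hL : forall j, j \in L -> (0 < val j)%N.

Definition cL : seq nat := [seq m <- iota 1 n | inK L m || (m == n)].
Definition alL : seq int := [seq Posz d | d <- pairmap dif 0 cL].

Lemma cL_path : path ltn 0 cL.
Proof. exact: path_filter_iota. Qed.

Lemma cL_last : last 0%N cL = n.
Proof.
have e : iota 1 n = iota 1 n.-1 ++ [:: n].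
  by rewrite -{1}(prednK hn) -(addn1 n.-1) iotaD add1n prednK.
by rewrite /cL e filter_cat last_cat /= eqxx orbT.
Qed.

Lemma psums_alL : psums (map absz alL) = cL.
Proof.
rewrite /alL -map_comp (@eq_map _ _ _ id) ?map_id; last by [].
by rewrite /psums scan_dif // path_ltn_leq // cL_path.
Qed.

Lemma mem_cL m : (0 < m)%N -> (m < n)%N -> (m \in psums (map absz alL)) = inK L m.
Proof.
move=> m0 mn; rewrite psums_alL /cL mem_filter mem_iota m0 /= add1n ltnS (ltnW mn) andbT.
by rewrite (ltn_eqF mn) orbF.
Qed.

Lemma blksign_alL k : blksign alL k = false.
Proof.
rewrite /blksign /alL; elim: (pairmap dif 0 cL) (blk _ k) => [|d s IH] [|j] //=.
Qed.

Lemma signed_comp_alL : signed_comp n alL.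
Proof.
split.
  rewrite /alL all_map; apply: sub_all (pos_dif cL_path) => d /= d0.
  by rewrite eqz_nat -lt0n.
rewrite /alL big_map /= -sumnE -[RHS]cL_last -(sum_dif (path_ltn_leq cL_path)) add0n.
by [].
Qed.
End Comp.

Lemma DesB_ascn n (x : bperm n) (i : 'I_n) (h : ((val i).+1 < n)%N) :
  (Ordinal h \in DesB x) = ~~ ascn x (val i).
Proof. by rewrite inE /ascn (bval_ltN x h) negbK. Qed.

Lemma ThetaB_alL n (hn : (0 < n)%N) (L : {set 'I_n}) (hL : forall j, j \in L -> (0 < val j)%N) :
  ThetaB (TB n (alL L)) = gsum (fun x => [set j in DesB x | (0 < val j)%N] == L).
Proof.
rewrite TB_Y; apply/ffunP => x; rewrite !ffunE; congr (if _ then _ else _).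
have key : forall (i : 'I_n) (h : ((val i).+1 < n)%N),
    ((aal (alL L) (val i) ==> ascn x (val i)) && (dal (alL L) (val i) ==> ~~ ascn x (val i))) =
    ((Ordinal h \in DesB x) == (Ordinal h \in L)).
  move=> i h; rewrite /aal /dal !blksign_alL /= ?addbF ?orbF blk_succ mem_cL //.
  rewrite -[(val i).+1]/(val (Ordinal h)) inK_val (DesB_ascn x h).
  by case: (Ordinal h \in L); case: (ascn x _).
apply/forallP/eqP => [H|E i].
  apply/setP => j; rewrite !inE; case: j => [[|k] kn] /=.
    by rewrite andbF; apply/esym/negbTE/negP => /hL.
  have kn' : (k < n)%N by apply: ltnW.
  have := H (Ordinal kn'); rewrite /= kn /= (key (Ordinal kn') kn) andbT.
  by move/eqP => <-; rewrite inE.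
apply/implyP => h; rewrite (key i h) -E.
by rewrite [in X in _ == X]inE /= andbT.
Qed.

Lemma XB_decomp n (K : {set 'I_n}) (hK : forall i : 'I_n, val i = 0%N -> i \in K) :
  XB K = \sum_(L : {set 'I_n} | [forall j in L, (0 < val j)%N] && (L \subset K))
           gsum (fun x => [set j in DesB x | (0 < val j)%N] == L).
Proof.
apply/ffunP => x; rewrite sum_ffunE ffunE.
under eq_bigr => L _ do rewrite ffunE.
rewrite sum_pick; congr (if _ then _ else _).
have -> : [forall j in [set j in DesB x | (0 < val j)%N], (0 < val j)%N].
  by apply/forall_inP => j; rewrite inE => /andP [].
apply/subsetP/subsetP => H j; first by rewrite inE => /andP [/H].
case: j => [[|k] kn] jD; first by apply: hK.
by apply: H; rewrite inE jD.
Qed.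

Theorem part3 n (hn : (0 < n)%N) (y : galg (bperm n)) :
  (exists a, inspan (@isTgen n) a /\ y = ThetaB a) <-> inspan (@isI0 n) y.
Proof.
have lB : glin (@ThetaB n) := gmul_lin _ _.
split.
  move=> [a [Ha ->]]; apply: (inspan_image lB) Ha => x [al [_ ->]].
  exact: ThetaB_TB_span.
move=> Hy; have := inimg_span lB _ Hy; apply.
move=> z [K [/existsP [i0 /andP [i0K /eqP i00]]] ->].
rewrite XB_decomp; last first.
  by move=> i e; have -> : i = i0 by apply: val_inj; rewrite /= e i00.
apply: inimg_sum => // L /andP [/forall_inP hL _].
exists (TB n (alL L)); split; last by rewrite ThetaB_alL.
apply: inspan1; exists (alL L); split => //.
exact: signed_comp_alL.
Qed.

Definition wt n (F : {set 'I_n}) := (\sum_(i in F) val i)%N.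

Lemma sum_subset n (A B : {set 'I_n}) (f : 'I_n -> nat) :
  A \subset B -> (\sum_(i in B) f i = \sum_(i in A) f i + \sum_(i in B :\: A) f i)%N.
Proof. by move=> AB; rewrite (big_setID A) (setIidPr AB). Qed.

Lemma peakset_gt1 n (F : {set 'I_n}) f : peakset F -> f \in F -> (1 < val f)%N.
Proof. by move=> /andP [/forall_inP H _] /H. Qed.

Lemma peakset_nc n (F : {set 'I_n}) f g : peakset F -> f \in F -> g \in F -> val f != (val g).+1.
Proof. by move=> /andP [_ /forall_inP H] /H /forall_inP H' /H'. Qed.

Section Weight.
Variables (n : nat) (F G : {set 'I_n}).
Hypotheses (pF : peakset F) (pG : peakset G).
Hypothesis hG : forall g, g \in G -> (g \in F) || inK F (val g).+1.
Hypothesis GF : G != F.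

Definition phi (g : 'I_n) : 'I_n :=
  if g \in F then g else odflt g [pick f in F | val f == (val g).+1].

Lemma phi_spec g : g \in G -> g \notin F -> (phi g \in F) && (val (phi g) == (val g).+1).
Proof.
move=> gG gF; rewrite /phi (negbTE gF).
have := hG gG; rewrite (negbTE gF) /= => /existsP [f fF].
by case: pickP => [f' /andP [-> ->]|/(_ f) /=]; rewrite ?fF.
Qed.

Lemma phi_in g : g \in G -> phi g \in F.
Proof.
move=> gG; case: (boolP (g \in F)) => gF; first by rewrite /phi gF.
by case/andP: (phi_spec gG gF).
Qed.

Lemma phi_inj : {in G &, injective phi}.
Proof.
have key : forall g1 g2, g1 \in G -> g2 \in G -> g1 \in F -> g2 \notin F -> phi g1 != phi g2.
  move=> g1 g2 g1G g2G g1F g2F; case/andP: (phi_spec g2G g2F) => _ /eqP e.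
  apply/eqP => e'; have := peakset_nc pG g1G g2G; rewrite -e -e' /phi g1F.
  by rewrite eqxx.
move=> g1 g2 g1G g2G; case: (boolP (g1 \in F)) => g1F; case: (boolP (g2 \in F)) => g2F.
- by rewrite /phi g1F g2F.
- by move=> e; move: (key _ _ g1G g2G g1F g2F); rewrite e eqxx.
- by move=> e; move: (key _ _ g2G g1G g2F g1F); rewrite e eqxx.
- case/andP: (phi_spec g1G g1F) => _ /eqP e1; case/andP: (phi_spec g2G g2F) => _ /eqP e2.
  by move=> e; apply: val_inj; apply: succn_inj; rewrite -e1 -e2 e.
Qed.

Lemma wt_lt : (wt G < wt F)%N.
Proof.
case: (boolP (G \subset F)) => sGF.
  have : G \proper F by rewrite properEneq GF.
  case/properP => _ [f fF fG].
  rewrite /wt (sum_subset _ sGF) -[X in (X < _)%N]addn0 ltn_add2l.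
  rewrite (big_setD1 f) ?inE ?fF ?fG //=; apply: ltn_addr; exact: ltnW (peakset_gt1 pF fF).
have [g0 g0G g0F] : exists2 g0, g0 \in G & g0 \notin F.
  by move/subsetPn: sGF => [g0 ? ?]; exists g0.
apply: (@leq_trans (\sum_(g in G) val (phi g))).
  rewrite /wt (big_setD1 g0 g0G) (big_setD1 g0 g0G) /= -addSn; apply: leq_add.
    by case/andP: (phi_spec g0G g0F) => _ /eqP ->.
  apply: leq_sum => g /setD1P [_ gG]; rewrite /phi; case: ifP => // gF.
  by case/andP: (phi_spec gG (negbT gF)) => _ /eqP; rewrite /phi gF => ->.
rewrite -(big_imset (fun f : 'I_n => val f) phi_inj) /wt.
have sub : [set phi x | x in G] \subset F by apply/subsetP => f /imsetP [g gG ->]; apply: phi_in.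
by rewrite (sum_subset _ sub) leq_addr.
Qed.
End Weight.

Lemma PA_img n (hn : (0 < n)%N) k : forall F : {set 'I_n}, peakset F -> (wt F < k)%N ->
  inimg (@isXA n) (@ThetaA n) (PA F).
Proof.
have lA : glin (@ThetaA n) := gmul_lin _ _.
elim: k => [//|k IH] F pF wk.
pose J := [set j : 'I_n | inK F (val j).+1].
have hJ : forall j, j \in J -> (0 < val j)%N.
  move=> j; rewrite inE => /existsP [f /andP [fF /eqP e]].
  by have := peakset_gt1 pF fF; rewrite e ltnS.
pose P := fun G : {set 'I_n} => peakset G && [forall g in G, inJJ1 J g].
have PF : P F.
  rewrite /P pF /=; apply/forall_inP => f fF; rewrite /inJJ1; apply/orP; right.
  have f1 := peakset_gt1 pF fF.
  have fn : ((val f).-1 < n)%N by apply: leq_ltn_trans (leq_pred _) (ltn_ord f).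
  apply/existsP; exists (Ordinal fn); rewrite inE /= prednK ?(ltnW f1) // eqxx andbT.
  by rewrite -[(val f)]/(val f) inK_val.
have e2 := part2 hn hJ.
set c : rat := (2 ^ (1 + #|J|))%:R in e2.
have c0 : c != 0 by rewrite /c pnatr_eq0 expn_eq0.
have -> : PA F = gscale c^-1 (ThetaA (XA J)) +
                 gscale (-1) (\sum_(G : {set 'I_n} | P G && (G != F)) PA G).
  rewrite e2 (bigD1 F) //=; apply/ffunP => w; rewrite !ffunE.
  by rewrite mulrA mulVf // mul1r mulN1r addrK.
apply: inimgD => //; apply: inimgZ => //.
  by exists (XA J); split => //; apply: inspan1; exists J.
apply: inimg_sum => // G /andP [/andP [pG hG] GF]; apply: IH => //.
rewrite ltnS in wk; apply: leq_trans _ wk; apply: (@wt_lt n F G) => // g gG.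
have := forall_inP hG g gG; rewrite /inJJ1 inE => /orP [->|/existsP [j /andP [jJ /eqP e]]].
  by rewrite orbT.
by move: jJ; rewrite inE e inK_val => ->.
Qed.

Theorem part4 n (hn : (0 < n)%N) (y : galg 'S_n) :
  (exists a, inspan (@isXA n) a /\ y = ThetaA a) <-> inspan (@isPA n) y.
Proof.
have lA : glin (@ThetaA n) := gmul_lin _ _.
split.
  move=> [a [Ha ->]]; apply: (inspan_image lA) Ha => x [J [hJ ->]].
  rewrite part2 //; apply: inspanZ; apply: inspan_sum => G /andP [pG _].
  by apply: inspan1; exists G.
move=> Hy; have := inimg_span lA _ Hy; apply.
move=> z [F [pF ->]]; exact: (PA_img hn pF (ltnSn _)).
Qed.

Unset Implicit Arguments.

Theorem proposition7p12 (n : nat) (hn : (0 < n)%N) :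
  (forall al : seq int, signed_comp n al ->
     ThetaB (StB n al) = X0B n (map absz al)) /\
  (forall J : {set 'I_n}, (forall j, j \in J -> 0 < val j)%N ->
     ThetaA (XA J) =
     gscale (2 ^ (1 + #|J|))%:R
       (\sum_(F : {set 'I_n} | peakset F && [forall f in F, inJJ1 J f]) PA F)) /\
  (forall y : galg (bperm n),
     (exists a, inspan (@isTgen n) a /\ y = ThetaB a) <-> inspan (@isI0 n) y) /\
  (forall y : galg 'S_n,
     (exists a, inspan (@isXA n) a /\ y = ThetaA a) <-> inspan (@isPA n) y).
Proof.
split; first by move=> al _; exact: part1.
split; first by move=> J hJ; exact: part2.
split; [exact: part3 | exact: part4].
Qed.
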